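(* Let $S$ be a semiring and $\Sigma$ an alphabet. The set $\mathrm{Rev}(S,\Sigma)$ is closed under addition and under both left and right scalar multiplication: if $r,s\in\mathrm{Rev}(S,\Sigma)$ and $\alpha\in S$, then $r+s$, $\alpha r$ and $r\alpha$ belong to $\mathrm{Rev}(S,\Sigma)$, where $(\alpha r,w)=\alpha\,(r,w)$ and $(r\alpha,w)=(r,w)\,\alpha$ for all $w\in\Sigma^*$.
   Context: A semiring $(S,+,\cdot,0,1)$ has $(S,+,0)$ a commutative monoid, $(S,\cdot,1)$ a monoid, $\cdot$ distributing over $+$ on both sides and $0$ absorbing. A formal power series over $S$ and a finite nonempty alphabet $\Sigma$ is a map $r\colon \Sigma^*\to S$, with value $(r,w)$ at $w$; addition is pointwise. A weighted automaton over $S$ and $\Sigma$ is $\mathcal{A}=(Q,\sigma,\iota,\tau)$ with $Q$ finite, $\sigma\colon Q\times\Sigma\times Q\to S$, $\iota,\tau\colon Q\to S$. A run on $w=a_1\cdots a_t$ is $q_0a_1q_1\cdots a_tq_t$ with all $\sigma(q_{k-1},a_k,q_k)\neq0$; its weight is $\iota(q_0)\sigma(q_0,a_1,q_1)\cdots\sigma(q_{t-1},a_t,q_t)\tau(q_t)$, and $(\|\mathcal{A}\|,w)$ is the sum of weights of all runs on $w$. $\mathcal{A}$ is reversible if for all $p,p',q,q'\in Q$, $a\in\Sigma$: (i) $\sigma(p,a,q)\neq0\neq\sigma(p,a,q')$ implies $q=q'$; (ii) $\sigma(p,a,q)\neq0\neq\sigma(p',a,q)$ implies $p=p'$. $\mathrm{Rev}(S,\Sigma)$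 is the set of series realised by reversible weighted automata over $S$ and $\Sigma$. *)

(* Defs.v *)
From mathcomp Require Import all_boot all_algebra.
Set Implicit Arguments. Unset Strict Implicit. Unset Printing Implicit Defensive.
Import GRing.Theory.
Local Open Scope ring_scope.

(* Semiring: pzSemiRingType (0 = 1 allowed, as in the paper's definition).
   Alphabet: a finType Sigma (nonemptiness is a hypothesis of the theorem). *)

Definition series (S : pzSemiRingType) (Sigma : finType) := seq Sigma -> S.

Record wautomaton (S : pzSemiRingType) (Sigma : finType) := WAut {
  wstate : finType;
  wtrans : wstate -> Sigma -> wstate -> S;
  winit : wstate -> S;
  wfin : wstate -> S }.

Section Behaviour.
Variables (S : pzSemiRingType) (Sigma : finType) (A : wautomaton S Sigma).

Definition is_run (w : seq Sigma) (qs : {ffun 'I_(size w).+1 -> wstate A}) : bool :=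
  [forall k : 'I_(size w),
     wtrans (qs (widen_ord (leqnSn _) k)) (tnth (in_tuple w) k) (qs (lift ord0 k)) != 0].

Definition run_weight (w : seq Sigma) (qs : {ffun 'I_(size w).+1 -> wstate A}) : S :=
  winit (qs ord0) *
  (\prod_(k < size w)
      wtrans (qs (widen_ord (leqnSn _) k)) (tnth (in_tuple w) k) (qs (lift ord0 k))) *
  wfin (qs ord_max).

Definition behaviour : series S Sigma :=
  fun w => \sum_(qs : {ffun 'I_(size w).+1 -> wstate A} | is_run qs) run_weight qs.

Definition reversible : Prop :=
  (forall (p q q' : wstate A) (a : Sigma),
      wtrans p a q != 0 -> wtrans p a q' != 0 -> q = q') /\
  (forall (p p' q : wstate A) (a : Sigma),
      wtrans p a q != 0 -> wtrans p' a q != 0 -> p = p').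

End Behaviour.

Definition Rev (S : pzSemiRingType) (Sigma : finType) (r : series S Sigma) : Prop :=
  exists A : wautomaton S Sigma, reversible A /\ behaviour A = r.

Definition series_add (S : pzSemiRingType) (Sigma : finType) (r s : series S Sigma)
  : series S Sigma := fun w => r w + s w.
Definition series_lscale (S : pzSemiRingType) (Sigma : finType) (a : S) (r : series S Sigma)
  : series S Sigma := fun w => a * r w.
Definition series_rscale (S : pzSemiRingType) (Sigma : finType) (r : series S Sigma) (a : S)
  : series S Sigma := fun w => r w * a.

(* Main.v *)
Require Import Defs.
From mathcomp Require Import all_boot all_algebra.
From Stdlib Require Import FunctionalExtensionality.
Set Implicit Arguments. Unset Strict Implicit. Unset Printing Implicit Defensive.
Import GRing.Theory.
Local Open Scope ring_scope.

Definition utrans (S : pzSemiRingType) (Sigma : finType) (A B : wautomaton S Sigma)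
  (p : (wstate A + wstate B)%type) (a : Sigma) (q : (wstate A + wstate B)%type) : S :=
  match p, q with
  | inl p, inl q => @wtrans _ _ A p a q
  | inr p, inr q => @wtrans _ _ B p a q
  | _, _ => 0 end.

Definition uaut (S : pzSemiRingType) (Sigma : finType) (A B : wautomaton S Sigma) :
  wautomaton S Sigma :=
  @WAut S Sigma (wstate A + wstate B)%type (@utrans S Sigma A B)
    (fun p => match p with inl p => @winit _ _ A p | inr p => @winit _ _ B p end)
    (fun p => match p with inl p => @wfin _ _ A p | inr p => @wfin _ _ B p end).

Definition is_inl (T U : Type) (u : (T + U)%type) : bool :=
  if u is inl _ then true else false.

Lemma run_side (S : pzSemiRingType) (Sigma : finType) (A B : wautomaton S Sigma)
  (w : seq Sigma) (qs : {ffun 'I_(size w).+1 -> wstate (uaut A B)}) :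
  is_run qs -> forall k : 'I_(size w).+1, is_inl (qs k) = is_inl (qs ord0).
Proof.
move=> /forallP H [k]; elim: k => [|k IH] Hk.
  by congr (is_inl (qs _)); apply: val_inj.
have Hk' : (k < size w)%N by [].
have := H (Ordinal Hk').
have -> : lift ord0 (Ordinal Hk') = Ordinal Hk by apply: val_inj.
have E : widen_ord (leqnSn _) (Ordinal Hk') = Ordinal (ltnW Hk) by apply: val_inj.
rewrite E -(IH (ltnW Hk)).
case: (qs (Ordinal (ltnW Hk))) => x; case: (qs (Ordinal Hk)) => y //=;
by rewrite eqxx.
Qed.

Definition getl (T U : Type) (x : T) (u : (T + U)%type) : T :=
  if u is inl y then y else x.
Definition getr (T U : Type) (x : U) (u : (T + U)%type) : U :=
  if u is inr y then y else x.

Lemma sum_left (S : pzSemiRingType) (Sigma : finType) (A B : wautomaton S Sigma)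
  (w : seq Sigma) :
  \sum_(qs : {ffun 'I_(size w).+1 -> wstate (uaut A B)} | is_run qs && is_inl (qs ord0))
     run_weight qs = behaviour A w.
Proof.
pose h := fun f : {ffun 'I_(size w).+1 -> wstate A} =>
  [ffun k => (inl (f k) : wstate (uaut A B))].
have hrun f : is_run (h f) = is_run f.
  by apply: eq_forallb => k; rewrite /h !ffunE.
have hw f : run_weight (h f) = run_weight f.
  rewrite /run_weight /h !ffunE; congr (_ * _ * _).
  by apply: eq_bigr => k _; rewrite !ffunE.
have hinj : injective h.
  move=> f g E; apply/ffunP => k.
  by have := congr1 (fun q : {ffun 'I_(size w).+1 -> wstate (uaut A B)} => q k) E; rewrite /h !ffunE => -[].
rewrite /behaviour.
rewrite (eq_bigl (fun qs => qs \in h @: [set f | is_run f])); last first.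
  move=> qs /=; apply/andP/imsetP.
    case=> Hr Hl; move: (Hr) => /run_side Hs.
    case E0: (qs ord0) Hl => [x|x] // _.
    exists [ffun k => getl x (qs k)].
      rewrite inE -hrun; suff -> : h [ffun k => getl x (qs k)] = qs by [].
      apply/ffunP => k; rewrite /h !ffunE; have := Hs k; rewrite E0.
      by case: (qs k).
    apply/ffunP => k; rewrite /h !ffunE; have := Hs k; rewrite E0.
    by case: (qs k).
  case=> f; rewrite inE => Hf ->; by rewrite hrun Hf /h ffunE.
rewrite big_imset /=; last by move=> f g _ _; apply: hinj.
by apply: eq_big => f; [rewrite inE | move=> _; rewrite hw].
Qed.

Lemma sum_right (S : pzSemiRingType) (Sigma : finType) (A B : wautomaton S Sigma)
  (w : seq Sigma) :
  \sum_(qs : {ffun 'I_(size w).+1 -> wstate (uaut A B)} | is_run qs && ~~ is_inl (qs ord0))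
     run_weight qs = behaviour B w.
Proof.
pose h := fun f : {ffun 'I_(size w).+1 -> wstate B} =>
  [ffun k => (inr (f k) : wstate (uaut A B))].
have hrun f : is_run (h f) = is_run f.
  by apply: eq_forallb => k; rewrite /h !ffunE.
have hw f : run_weight (h f) = run_weight f.
  rewrite /run_weight /h !ffunE; congr (_ * _ * _).
  by apply: eq_bigr => k _; rewrite !ffunE.
have hinj : injective h.
  move=> f g E; apply/ffunP => k.
  by have := congr1 (fun q : {ffun 'I_(size w).+1 -> wstate (uaut A B)} => q k) E; rewrite /h !ffunE => -[].
rewrite /behaviour.
rewrite (eq_bigl (fun qs => qs \in h @: [set f | is_run f])); last first.
  move=> qs /=; apply/andP/imsetP.
    case=> Hr Hl; move: (Hr) => /run_side Hs.
    case E0: (qs ord0) Hl => [x|x] // _.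
    exists [ffun k => getr x (qs k)].
      rewrite inE -hrun; suff -> : h [ffun k => getr x (qs k)] = qs by [].
      apply/ffunP => k; rewrite /h !ffunE; have := Hs k; rewrite E0.
      by case: (qs k).
    apply/ffunP => k; rewrite /h !ffunE; have := Hs k; rewrite E0.
    by case: (qs k).
  case=> f; rewrite inE => Hf ->; by rewrite hrun Hf /h ffunE.
rewrite big_imset /=; last by move=> f g _ _; apply: hinj.
by apply: eq_big => f; [rewrite inE | move=> _; rewrite hw].
Qed.

Theorem proposition2 (S : pzSemiRingType) (Sigma : finType) (HSigma : (0 < #|Sigma|)%N)
  (r s : series S Sigma) (alpha : S) :
  Rev r -> Rev s ->
  Rev (series_add r s) /\ Rev (series_lscale alpha r) /\ Rev (series_rscale r alpha).
Proof.
move=> [A [[HA1 HA2] <-]] [B [[HB1 HB2] <-]]; split; [|split].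
- exists (uaut A B); split.
    split.
      move=> [p|p] [q|q] [q'|q'] a //=; rewrite ?eqxx // => H1 H2;
      by rewrite (HA1 _ _ _ _ H1 H2) || rewrite (HB1 _ _ _ _ H1 H2).
    move=> [p|p] [p'|p'] [q|q] a //=; rewrite ?eqxx // => H1 H2;
    by rewrite (HA2 _ _ _ _ H1 H2) || rewrite (HB2 _ _ _ _ H1 H2).
  apply: functional_extensionality => w; rewrite /series_add -(sum_left A B) -(sum_right A B).
  by rewrite /behaviour (bigID (fun qs : {ffun 'I_(size w).+1 -> wstate (uaut A B)} => is_inl (qs ord0))).
- exists (@WAut S Sigma (wstate A) (@wtrans _ _ A) (fun p => alpha * @winit _ _ A p)
      (@wfin _ _ A)); split; first by split.
  apply: functional_extensionality => w; rewrite /series_lscale /behaviour mulr_sumr.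
  by apply: eq_bigr => qs _; rewrite /run_weight /= !mulrA.
- exists (@WAut S Sigma (wstate A) (@wtrans _ _ A) (@winit _ _ A)
      (fun p => @wfin _ _ A p * alpha)); split; first by split.
  apply: functional_extensionality => w; rewrite /series_rscale /behaviour mulr_suml.
  by apply: eq_bigr => qs _; rewrite /run_weight /= !mulrA.
Qed.
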